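(* For all $0<b<B\le1$ and every integer $n\ge1$ there exists an instance $\langle A,f,c\rangle$ with $|A|=n$, $f$ additive, and $p(\{i\})\le b$ for all $i\in A$, such that $$\frac{\textsc{Max-Reward}(B)}{\textsc{Max-Reward}(b)}=\frac{\textsc{Max-Welfare}(B)}{\textsc{Max-Welfare}(b)}=\min\big(\lceil 2B/b\rceil-1,\,n\big).$$
   Context: An instance $\langle A,f,c\rangle$ consists of a finite set $A$ of agents, a monotone nondecreasing $f:2^A\to[0,1]$, and costs $c_i\ge0$. For $S\subseteq A$, $i\in S$: $f_S(i)=f(S)-f(S\setminus\{i\})$; $p(S)=\sum_{i\in S}c_i/f_S(i)$ (conventions: $0$ if $c_i=0=f_S(i)$, $\infty$ if $c_i>0=f_S(i)$). $f$ is additive if $f(S)=\sum_{i\in S}f(\{i\})$. $\textsc{Max-Reward}(B)=\max\{f(S):p(S)\le B\}$ and $\textsc{Max-Welfare}(B)=\max\{f(S)-\sum_{i\in S}c_i:p(S)\le B\}$. *)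

(* Defs.v *)
From mathcomp Require Import all_boot all_order all_algebra.
From mathcomp Require Import reals.
Set Implicit Arguments. Unset Strict Implicit. Unset Printing Implicit Defensive.
Import Order.TTheory GRing.Theory Num.Theory.
Local Open Scope ring_scope.

Section Contracts.
Variables (R : realType) (A : finType) (f : {set A} -> R) (c : A -> R).

Definition marg (S : {set A}) (i : A) : R := f S - f (S :\ i).

(* the term c_i / f_S(i), with the conventions 0 if c_i = 0 = f_S(i) and
   +infinity (encoded as None) if c_i > 0 = f_S(i) *)
Definition pterm (S : {set A}) (i : A) : option R :=
  if marg S i == 0 then (if c i == 0 then Some 0 else None)
  else Some (c i / marg S i).

Definition price (S : {set A}) : option R :=
  if [forall i in S, pterm S i != None]
  then Some (\sum_(i in S) odflt 0 (pterm S i))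
  else None.

Definition price_le (S : {set A}) (B : R) : bool :=
  if price S is Some x then x <= B else false.

(* Max-Reward(B) = max { f(S) : p(S) <= B }.  The empty set is always
   feasible (p(empty) = 0 <= B for B >= 0) and f >= 0, so folding max from 0
   gives exactly the maximum. *)
Definition MaxReward (B : R) : R :=
  \big[Num.max/0]_(S : {set A} | price_le S B) f S.

(* Max-Welfare(B) = max { f(S) - sum_{i in S} c_i : p(S) <= B }; again the
   empty set is feasible with value f(empty) >= 0. *)
Definition MaxWelfare (B : R) : R :=
  \big[Num.max/0]_(S : {set A} | price_le S B) (f S - \sum_(i in S) c i).

End Contracts.

Definition valid_instance (R : realType) (A : finType)
  (f : {set A} -> R) (c : A -> R) : Prop :=
  (forall S, 0 <= f S <= 1) /\
  (forall S T : {set A}, S \subset T -> f S <= f T) /\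
  (forall i, 0 <= c i).

Definition additive_val (R : realType) (A : finType) (f : {set A} -> R) : Prop :=
  forall S : {set A}, f S = \sum_(i in S) f [set i].

(* Main.v *)
Require Import Defs.
From mathcomp Require Import all_boot all_order all_algebra.
From mathcomp Require Import reals.
From mathcomp Require Import ring lra.
Import Order.TTheory GRing.Theory Num.Theory.
Local Open Scope ring_scope.

Lemma bigmax_ge (R : realType) (T : eqType) (r : seq T) (P : pred T) (F : T -> R) x :
  x \in r -> P x -> F x <= \big[Num.max/0]_(i <- r | P i) F i.
Proof.
elim: r => // y r IH; rewrite inE big_cons => /orP [/eqP<- | xr] Px.
  by rewrite Px le_max lexx.
case: ifP => _; last exact: IH.
by rewrite le_max IH ?orbT.
Qed.

Lemma bigmax_leu (R : realType) (T : Type) (r : seq T) (P : pred T) (F : T -> R) u :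
  0 <= u -> (forall i, P i -> F i <= u) -> \big[Num.max/0]_(i <- r | P i) F i <= u.
Proof.
move=> u0 H; apply: (big_ind (fun x => x <= u)) => //.
by move=> x y hx hy; rewrite ge_max hx hy.
Qed.

Lemma maxcard (R : realType) n (q : nat) (w : R) : 0 < w -> (q <= n)%N ->
  \big[Num.max/0]_(S : {set 'I_n} | (#|S| <= q)%N) (#|S|%:R * w) = q%:R * w.
Proof.
move=> w0 qn; apply/le_anti/andP; split.
  apply: bigmax_leu; first by rewrite mulr_ge0 // ltW.
  by move=> S HS; rewrite ler_pM2r // ler_nat.
set S0 := [set widen_ord qn x | x in 'I_q].
have cS0 : #|S0| = q.
  rewrite card_imset ?card_ord //.
  by move=> x y /(congr1 val) /= /val_inj.
rewrite -{1}cS0; apply: (@bigmax_ge R _ _ _ (fun S : {set 'I_n} => #|S|%:R * w)).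
  by rewrite mem_index_enum.
by rewrite cS0 /=.
Qed.

Definition instf (R : realType) (n : nat) (S : {set 'I_n}) : R := #|S|%:R / n%:R.
Definition instc (R : realType) (n : nat) (t : R) (i : 'I_n) : R := t / n%:R.

Lemma inst_price (R : realType) (n : nat) (t : R) (S : {set 'I_n}) : (0 < n)%N ->
  price (@instf R n) (@instc R n t) S
  = Some (#|S|%:R * t).
Proof.
move=> n0.
have nR : (n%:R : R) != 0 by rewrite pnatr_eq0 -lt0n.
have HP : forall i, i \in S ->
   pterm (@instf R n) (@instc R n t) S i = Some t.
  move=> i iS.
  have hm : marg (@instf R n) S i = 1 / n%:R.
    rewrite /marg /instf (cardsD1 i S) iS natrD /=; field; exact: nR.
  rewrite /pterm hm /instc.
  have -> : (1 / n%:R == 0 :> R) = false.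
    by apply/negbTE; rewrite mulf_neq0 ?oner_eq0 ?invr_eq0.
  congr Some; field; exact: nR.
rewrite /price.
have -> : [forall i in S, pterm (@instf R n) (@instc R n t) S i != None] = true.
  by apply/forall_inP => i iS; rewrite HP.
congr Some.
rewrite (eq_bigr (fun _ => t)); last by move=> i iS; rewrite HP.
by rewrite sumr_const mulr_natl.
Qed.

Theorem mainTheorem13 (R : realType) (b B : R) (n : nat) :
  0 < b -> b < B -> B <= 1 -> (1 <= n)%N ->
  exists (A : finType) (f : {set A} -> R) (c : A -> R),
    [/\ valid_instance f c, #|A| = n, additive_val f,
        (forall i : A, price_le f c [set i] b) &
        let k := Num.min ((Num.ceil (2 * B / b))%:~R - 1) (n%:R : R) in
        MaxReward f c B / MaxReward f c b = k /\
        MaxWelfare f c B / MaxWelfare f c b = k].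
Proof.
move=> b0 bB B1 n1.
have [hM1 hM2] := andP (ceil_itv (2 * B / b)).
have [mn Hm] : exists mn : nat, Num.ceil (2 * B / b) - 1 = mn%:Z.
  have x1 : 1 < 2 * B / b.
    rewrite ltr_pdivlMr //; lra.
  have : (1 < Num.ceil (2 * B / b))%R by rewrite ceil_gt_int.
  rewrite -subr_gt0.
  case: (Num.ceil (2 * B / b) - 1) => [m|m] // _; by exists m.
set M : R := mn%:R.
have HMc : (Num.ceil (2 * B / b))%:~R = M + 1.
  by rewrite -(subrK 1 (Num.ceil _)) Hm intrD.
rewrite Hm /= in hM1; rewrite HMc in hM2.
have hb1 : 2 * B <= M * b + b by move: hM2; rewrite ler_pdivrMr //; lra.
have hb2 : M * b < 2 * B by move: hM1; rewrite ltr_pdivlMr.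
have M0 : 0 < M by nra.
pose t := B / M.
have tM : t * M = B by rewrite /t mulrVK // unitfE gt_eqF.
have t0 : 0 < t by rewrite divr_gt0 // (lt_trans b0 bB).
have tb : t <= b by nra.
have t2 : b < 2 * t by nra.
have t1 : t < 1 by lra.
have n0 : (0 < n)%N by [].
have nR : (0 : R) < n%:R by rewrite ltr0n.
set q := minn mn n.
have qn : (q <= n)%N by rewrite geq_minr.
have cn : forall S : {set 'I_n}, (#|S| <= n)%N.
  by move=> S; rewrite -[X in (_ <= X)%N]card_ord max_card.
have hPB : forall S : {set 'I_n}, price_le (@instf R n) (@instc R n t) S B = (#|S| <= q)%N.
  move=> S; rewrite /price_le inst_price // -tM mulrC ler_pM2l // ler_nat.
  by rewrite leq_min cn andbT.
have hPb : forall S : {set 'I_n}, price_le (@instf R n) (@instc R n t) S b = (#|S| <= 1)%N.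
  move=> S; rewrite /price_le inst_price //.
  case: (leqP #|S| 1) => h.
    have : (#|S|%:R : R) <= 1 by rewrite lern1.
    have : (0 : R) <= #|S|%:R by [].
    move=> *; apply/idP; nra.
  have : (2 : R) <= #|S|%:R by rewrite (ler_nat R 2).
  move=> *; apply/negbTE; rewrite -ltNge; nra.
have q1 : (1 <= q)%N by rewrite leq_min n1 andbT -(ler1n R) -/M; nra.
have kE : Num.min ((Num.ceil (2 * B / b))%:~R - 1) (n%:R : R) = q%:R.
  by rewrite HMc addrK /q natr_min.
exists 'I_n, (@instf R n), (@instc R n t); split.
- split; [move=> S | split; [move=> S T ST | move=> i]].
  + rewrite /instf divr_ge0 //= ler_pdivrMr // mul1r ler_nat; exact: cn.
  + rewrite /instf ler_wpM2r ?invr_ge0 ?ler0n // ler_nat; exact: subset_leq_card.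
  + by rewrite /instc divr_ge0 // ltW.
- by rewrite card_ord.
- move=> S; rewrite /instf.
  under eq_bigr do rewrite cards1.
  by rewrite sumr_const -[RHS]mulr_natl mul1r.
- by move=> i; rewrite hPb cards1.
- rewrite kE /=; split.
  + rewrite /MaxReward (eq_bigl _ _ hPB) (eq_bigl _ _ hPb).
    rewrite /instf !maxcard ?invr_gt0 // mul1r mulfK //.
    by rewrite invr_eq0 gt_eqF.
  + have hw : forall S : {set 'I_n}, @instf R n S - \sum_(i in S) @instc R n t i = #|S|%:R * ((1 - t) / n%:R).
      move=> S; rewrite /instf /instc sumr_const -mulr_natl; field; by rewrite gt_eqF.
    rewrite /MaxWelfare (eq_bigl _ _ hPB) (eq_bigl _ _ hPb).
    rewrite !(eq_bigr _ (fun S _ => hw S)).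
    have w0 : 0 < (1 - t) / n%:R by rewrite divr_gt0 // subr_gt0.
    rewrite !maxcard // mul1r mulfK //; by rewrite gt_eqF.
Qed.
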